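(* Let $n\ge3$, $2\le i\le n-1$, $\mathfrak g=\mathfrak{sp}(n,\mathbb C)$, $\mathfrak q$ of type $C_n(i)$, $\mu=\varepsilon_1+\varepsilon_{i+1}$, $\epsilon_\gamma=\varepsilon_2-\varepsilon_{i+1}$, and set $Y^*_l:=\frac{8c_0^2}{i+1}\mathrm{pr}_{\mathfrak l_\gamma\otimes\mathfrak z(\bar{\mathfrak n})}(\bar\tau_2(X_{-\mu}+X_{-\epsilon_\gamma}))$. Then $$Y^*_l=\frac{4c_0}{i+1}X_{\varepsilon_1-\varepsilon_2}\otimes X_{-2\varepsilon_1}-\frac{4c_0}{i+1}X_{-(\varepsilon_1-\varepsilon_2)}\otimes X_{-2\varepsilon_2}+\frac{2c_0}{i+1}\sum_{k=3}^iX_{-(\varepsilon_2-\varepsilon_k)}\otimes X_{-(\varepsilon_1+\varepsilon_k)}$$ $$-\frac{2c_0}{i+1}\sum_{k=3}^iX_{-(\varepsilon_1-\varepsilon_k)}\otimes X_{-(\varepsilon_2+\varepsilon_k)}-\frac{2c_0}{i+1}H_{\varepsilon_1-\varepsilon_2}\otimes X_{-(\varepsilon_1+\varepsilon_2)}.$$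
   Context: $\mathfrak g=\mathfrak{sp}(n,\mathbb C)\subset\mathfrak{gl}(2n,\mathbb C)$; $\hat j=j+n$, $E_{ab}$ matrix units. Cartan $\mathfrak h$ = matrices $\sum_jh_j(E_{jj}-E_{\hat j\hat j})$, $\varepsilon_j$ picks $h_j$. Roots $\pm\varepsilon_j\pm\varepsilon_k$ ($j<k$), $\pm2\varepsilon_j$; simple roots $\alpha_j=\varepsilon_j-\varepsilon_{j+1}$ ($j<n$), $\alpha_n=2\varepsilon_n$. Root vectors: $X_{\varepsilon_j-\varepsilon_k}=E_{jk}-E_{\hat k\hat j}$ for $j\neq k$ (so $X_{-(\varepsilon_j-\varepsilon_k)}=X_{\varepsilon_k-\varepsilon_j}$), $X_{\varepsilon_j+\varepsilon_k}=E_{j\hat k}+E_{k\hat j}$, $X_{-(\varepsilon_j+\varepsilon_k)}=E_{\hat jk}+E_{\hat kj}$, $X_{2\varepsilon_j}=E_{j\hat j}$, $X_{-2\varepsilon_j}=E_{\hat jj}$; $H_\alpha=[X_\alpha,X_{-\alpha}]$, so $H_{\varepsilon_1-\varepsilon_2}=(E_{11}-E_{\hat1\hat1})-(E_{22}-E_{\hat2\hat2})$. The Killing form is $\kappa=c_0\mathrm{Tr}(XY)$, $c_0>0$ constant. $\mathfrak q=\mathfrak l\oplus\mathfrak n$ is the standard maximal parabolic subalgebra determined by $\alpha_i$; grading $\mathfrak g=\bigoplus_{j=-2}^2\mathfrak g(j)$ by the $\alpha_i$-coefficient, $\mathfrak l=\mathfrak g(0)$, $\mathfrak z(\bar{\mathfrak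 n})=\mathfrak g(-2)$ (roots $-(\varepsilon_j+\varepsilon_k)$, $j<k\le i$, and $-2\varepsilon_j$, $j\le i$), $\mathfrak g(-1)$ has roots $-(\varepsilon_j\pm\varepsilon_k)$, $j\le i<k$. $\mathfrak l=\mathfrak z(\mathfrak l)\oplus\mathfrak l_\gamma\oplus\mathfrak l_{n\gamma}$ with $\mathfrak l_\gamma\cong\mathfrak{sl}(i,\mathbb C)$ (simple roots $\alpha_1,\dots,\alpha_{i-1}$), $\mathfrak l_{n\gamma}\cong\mathfrak{sp}(n-i,\mathbb C)$ (simple roots $\alpha_{i+1},\dots,\alpha_n$), $\mathfrak z(\mathfrak l)$ the center; $\mathrm{pr}_{\mathfrak l_\gamma\otimes\mathfrak z(\bar{\mathfrak n})}$ is the projection along this decomposition. $\bar\omega=\frac1{c_0}\sum_{j=1}^iX_{2\varepsilon_j}\otimes X_{-2\varepsilon_j}+\frac1{2c_0}\sum_{1\le j<k\le i}X_{\varepsilon_j+\varepsilon_k}\otimes X_{-(\varepsilon_j+\varepsilon_k)}$, $\bar\tau_2(Y)=\tfrac12(\mathrm{ad}(Y)^2\otimes\mathrm{Id})\bar\omega$ for $Y\in\mathfrak g(-1)$. *)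

(* Defs.v *)
From HB Require Import structures.
From mathcomp Require Import all_boot all_order all_algebra.
From mathcomp Require Import algC.
Set Implicit Arguments. Unset Strict Implicit. Unset Printing Implicit Defensive.
Import Order.TTheory GRing.Theory Num.Theory.
Local Open Scope ring_scope.

(* sp(n,C) inside gl(2n,C), with C = algC.  Matrices of size n+n, rows and
   columns indexed 0..2n-1.  Paper indices j in 1..n correspond to position
   j-1, and the hatted index \hat j = j+n to position n+j-1. *)

Section SpDefs.
Variable n : nat.
Local Notation N := (n + n)%N.
Local Notation M := 'M[algC]_N.

Definition Eu (a b : nat) : M :=
  \matrix_(r, c) ((val r == a) && (val c == b))%:R.

Definition pos (j : nat) : nat := j.-1.
Definition hpos (j : nat) : nat := (n + j.-1)%N.

(* X_{eps_j - eps_k} = E_{jk} - E_{\hat k \hat j}  (j <> k) *)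
Definition Xd (j k : nat) : M := Eu (pos j) (pos k) - Eu (hpos k) (hpos j).
(* X_{eps_j + eps_k} = E_{j \hat k} + E_{k \hat j} *)
Definition Xp (j k : nat) : M := Eu (pos j) (hpos k) + Eu (pos k) (hpos j).
(* X_{-(eps_j + eps_k)} = E_{\hat j k} + E_{\hat k j} *)
Definition Xnp (j k : nat) : M := Eu (hpos j) (pos k) + Eu (hpos k) (pos j).
(* X_{2 eps_j} = E_{j \hat j},  X_{-2 eps_j} = E_{\hat j j} *)
Definition X2 (j : nat) : M := Eu (pos j) (hpos j).
Definition Xm2 (j : nat) : M := Eu (hpos j) (pos j).

(* H_alpha = [X_alpha, X_{-alpha}] for alpha = eps_j - eps_k *)
Definition Hd (j k : nat) : M := Xd j k *m Xd k j - Xd k j *m Xd j k.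
(* Cartan element E_{jj} - E_{\hat j \hat j} (the element dual to eps_j) *)
Definition hc (j : nat) : M := Eu (pos j) (pos j) - Eu (hpos j) (hpos j).

Definition ad (Y A : M) : M := Y *m A - A *m Y.

(* Tensors in gl(2n) (x) gl(2n): T = sum A (x) B is encoded as the N x N
   matrix of matrices whose (r,c) entry is sum B r c *: A (an isomorphism
   gl(2n) (x) gl(2n) ~ M_N(M_N)).  For linear f, (f (x) Id) is map_mx f. *)
Definition tensor := 'M['M[algC]_N]_N.
Definition tens (A B : M) : tensor := \matrix_(r, c) (B r c *: A).
Definition tscale (a : algC) (T : tensor) : tensor := map_mx (fun A => a *: A) T.
Definition tmapl (f : M -> M) (T : tensor) : tensor := map_mx f T.

Definition omegabar (i : nat) (c0 : algC) : tensor :=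
  tscale (c0^-1) (\sum_(1 <= j < i.+1) tens (X2 j) (Xm2 j))
  + tscale ((2 * c0)^-1)
      (\sum_(1 <= j < i.+1) \sum_(j.+1 <= k < i.+1) tens (Xp j k) (Xnp j k)).

Definition tau2bar (i : nat) (c0 : algC) (Y : M) : tensor :=
  tscale (2^-1) (tmapl (fun A => ad Y (ad Y A)) (omegabar i c0)).

(* p is the projection of g = sp(n) onto l_gamma = sl(i) along
   g = z(l) (+) l_gamma (+) l_ngamma (+) (+)_{j <> 0} g(j), the grading being
   by the alpha_i-coefficient.  It is specified as a linear map on gl(2n)
   by its values on a basis of sp(n) adapted to this decomposition. *)
Definition is_pr_lgamma (i : nat) (p : M -> M) : Prop :=
  linear p /\
   (* l_gamma: identity on H_{alpha_j} (1 <= j < i) and on X_{eps_j - eps_k},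
      j <> k <= i *)
   (forall j, (1 <= j < i)%N -> p (Hd j j.+1) = Hd j j.+1) /\
   (forall j k, (1 <= j <= i)%N -> (1 <= k <= i)%N -> j != k ->
       p (Xd j k) = Xd j k) /\
   (* z(l): spanned by sum_{j <= i} (E_jj - E_{\hat j \hat j}) *)
   p (\sum_(1 <= j < i.+1) hc j) = 0 /\
   (* l_ngamma = sp(n-i) on the indices i+1..n *)
   (forall k, (i < k <= n)%N -> p (hc k) = 0) /\
   (forall j k, (i < j <= n)%N -> (i < k <= n)%N -> j != k -> p (Xd j k) = 0) /\
   (forall j k, (i < j < k)%N -> (k <= n)%N -> p (Xp j k) = 0 /\ p (Xnp j k) = 0) /\
   (forall j, (i < j <= n)%N -> p (X2 j) = 0 /\ p (Xm2 j) = 0) /\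
   (* g(+-1): roots +-(eps_j - eps_k), +-(eps_j + eps_k), j <= i < k *)
   (forall j k, (1 <= j <= i)%N -> (i < k <= n)%N ->
      p (Xd j k) = 0 /\ p (Xd k j) = 0 /\ p (Xp j k) = 0 /\ p (Xnp j k) = 0) /\
   (* g(+-2): roots +-(eps_j + eps_k), j < k <= i, and +-2 eps_j, j <= i *)
   (forall j k, (1 <= j < k)%N -> (k <= i)%N -> p (Xp j k) = 0 /\ p (Xnp j k) = 0) /\
   (forall j, (1 <= j <= i)%N -> p (X2 j) = 0 /\ p (Xm2 j) = 0).

End SpDefs.

(* Main.v *)
Require Import Defs.
From HB Require Import structures.
From mathcomp Require Import all_boot all_order all_algebra.
From mathcomp Require Import algC.
From mathcomp Require Import zify ring.
Import Order.TTheory GRing.Theory Num.Theory.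
Local Open Scope ring_scope.

Lemma EuM n a b c d : Eu n a b *m Eu n c d = ((b == c) && (b < n + n)%N)%:R *: Eu n a d.
Proof.
apply/matrixP => r s; rewrite !mxE.
case: (ltnP b (n + n)) => hb.
  rewrite (bigD1 (Ordinal hb)) //= big1 ?addr0.
    rewrite !mxE /= eqxx andbT.
    by case: (r == a :> nat); case: (b == c); case: (s == d :> nat); rewrite /= ?mulr1 ?mulr0 ?mul1r ?mul0r.
  move=> k hk; rewrite !mxE.
  have -> : (val k == b) = false.
    by apply/negbTE; apply: contra hk => /eqP e; apply/eqP/val_inj.
  by rewrite andbF mul0r.
rewrite andbF mul0r big1 // => k _; rewrite !mxE.
have -> : (val k == b) = false by apply/negbTE/eqP => e; move: (ltn_ord k); rewrite e; lia.
by rewrite andbF mul0r.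
Qed.

Ltac decide1 := match goal with
  | |- context [(?x == ?y :> nat)] =>
      first [ rewrite (_ : (x == y) = true); last by (apply/eqP; lia)
            | rewrite (_ : (x == y) = false); last by (apply/negbTE/eqP; lia) ]
  | |- context [(?x <= ?y)%N] =>
      first [ rewrite (_ : (x <= y)%N = true); last by lia
            | rewrite (_ : (x <= y)%N = false); last by (apply/negbTE; lia) ]
  end.

Ltac split1 := match goal with
  | |- context [(?x == ?y :> nat)] => is_var x; case: eqP => ?; [subst x|]
  end.

Ltac expand := repeat progress rewrite ?mulmxDl ?mulmxDr ?mulmxBl ?mulmxBr ?mulmxN ?mulNmx
  -?scalemxAl -?scalemxAr ?mulmxA ?EuM ?scalerA ?scalerN ?scalerDr ?scalerBr.

Ltac crunch := unfold Hd, ad, Xnp, Xd, X2, Xm2, Xp, hc, pos, hpos; expand;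
  repeat decide1;
  rewrite /= ?mulr0 ?mul0r ?mulr1 ?mul1r ?scale0r ?scale1r ?oppr0 ?addr0 ?add0r ?subr0 ?sub0r ?opprK;
  apply/matrixP => ??; rewrite !mxE;
  match goal with r : 'I_ _, s : 'I_ _ |- _ => move: (nat_of_ord r) (nat_of_ord s) => ?? end;
  repeat (first [decide1 | split1]); rewrite /=; ring.


Lemma Hd12 n : (2 <= n)%N -> Hd n 1 2 = hc n 1 - hc n 2.
Proof. move=> hn; crunch. Qed.

Section S.
Variables (n i : nat).
Hypotheses (hi : (2 <= i)%N) (hin : (i.+1 <= n)%N).
Let Y := Xnp n 1 i.+1 + Xd n i.+1 2.

Lemma LA1 : ad Y (ad Y (X2 n 1)) = Xd n 1 2 - (Xm2 n i.+1 + Xm2 n i.+1).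
Proof. rewrite /Y; crunch. Qed.
Lemma LA2 : ad Y (ad Y (X2 n 2)) = (X2 n i.+1 + X2 n i.+1) - Xd n 2 1.
Proof. rewrite /Y; crunch. Qed.
Lemma LA3 j : (3 <= j <= i)%N -> ad Y (X2 n j) = 0.
Proof. case/andP=> h1 h2; rewrite /Y; crunch. Qed.
Lemma LB12 : ad Y (ad Y (Xp n 1 2)) = hc n 2 - hc n 1 - (hc n i.+1 + hc n i.+1).
Proof. rewrite /Y; crunch. Qed.
Lemma LB1 k : (3 <= k <= i)%N -> ad Y (ad Y (Xp n 1 k)) = Xd n k 2.
Proof. case/andP=> h1 h2; rewrite /Y; crunch. Qed.
Lemma LB2 k : (3 <= k <= i)%N -> ad Y (ad Y (Xp n 2 k)) = - Xd n k 1.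
Proof. case/andP=> h1 h2; rewrite /Y; crunch. Qed.
Lemma LB3 j k : (3 <= j)%N -> (j < k <= i)%N -> ad Y (Xp n j k) = 0.
Proof. move=> h1 /andP[h2 h3]; rewrite /Y; crunch. Qed.
End S.

Set Implicit Arguments. Unset Strict Implicit.


Section Lin.
Variables (N : nat) (f : 'M[algC]_N -> 'M[algC]_N).
Hypothesis fL : linear f.
Lemma lin0 : f 0 = 0.
Proof.
have h := fL 1 0 0; rewrite !scale1r !addr0 in h.
by move/(congr1 (fun z => z - f 0)): h; rewrite subrr addrK => <-.
Qed.
Lemma linD x y : f (x + y) = f x + f y.
Proof. by have := fL 1 x y; rewrite !scale1r. Qed.
Lemma linZ a x : f (a *: x) = a *: f x.
Proof. by have := fL a x 0; rewrite !addr0 lin0 addr0. Qed.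
Lemma linN x : f (- x) = - f x.
Proof. by rewrite -scaleN1r linZ scaleN1r. Qed.
Lemma linB x y : f (x - y) = f x - f y.
Proof. by rewrite linD linN. Qed.
Lemma linsum I r (P : pred I) (F : I -> 'M_N) :
  f (\sum_(j <- r | P j) F j) = \sum_(j <- r | P j) f (F j).
Proof. exact: (big_morph f linD lin0). Qed.
End Lin.

Lemma adL n (Y : 'M[algC]_(n + n)) : linear (ad Y).
Proof.
move=> a u v; rewrite /ad mulmxDr mulmxDl -scalemxAr -scalemxAl.
by rewrite scalerBr addrACA opprD.
Qed.

Lemma sum_nat0 (V : zmodType) a b (F : nat -> V) :
  (forall j, (a <= j < b)%N -> F j = 0) -> \sum_(a <= j < b) F j = 0.
Proof. by move=> H; rewrite big_nat_cond big1 // => j /andP[hj _]; apply: H. Qed.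

Lemma linsumZ N (f : 'M[algC]_N -> 'M[algC]_N) (fL : linear f) I r (P : pred I) b A :
  f (\sum_(j <- r | P j) (b j *: A j : 'M[algC]_N)) = \sum_(j <- r | P j) (b j *: f (A j) : 'M[algC]_N).
Proof. by rewrite (linsum fL); apply: eq_bigr => j _; rewrite (linZ fL). Qed.

Lemma compL N (f g : 'M[algC]_N -> 'M[algC]_N) : linear f -> linear g -> linear (fun A => f (g A)).
Proof. by move=> fL gL a u v /=; rewrite (linD gL) (linZ gL) (linD fL) (linZ fL). Qed.

Lemma tensE n (A B : 'M[algC]_(n + n)) r c : tens A B r c = B r c *: A.
Proof. by rewrite mxE. Qed.

Lemma sumtensE n I s (P : pred I) (A B : I -> 'M[algC]_(n + n)) r c :
  (\sum_(j <- s | P j) tens (A j) (B j)) r c = \sum_(j <- s | P j) B j r c *: A j.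
Proof. by rewrite summxE; apply: eq_bigr => j _; rewrite tensE. Qed.

Lemma sum2tensE n I J s (t : I -> seq J) (A B : I -> J -> 'M[algC]_(n + n)) r c :
  (\sum_(j <- s) \sum_(k <- t j) tens (A j k) (B j k)) r c =
  \sum_(j <- s) \sum_(k <- t j) B j k r c *: A j k.
Proof. by rewrite summxE; apply: eq_bigr => j _; rewrite sumtensE. Qed.

Lemma tscaleE n a (T : tensor n) r c : tscale a T r c = a *: T r c.
Proof. by rewrite mxE. Qed.
Lemma tmaplE n f (T : tensor n) r c : tmapl f T r c = f (T r c).
Proof. by rewrite mxE. Qed.

Lemma linsumT N (f : 'M[algC]_N -> 'M[algC]_N) (fL : linear f) I r (F : I -> 'M_N) :
  f (\sum_(j <- r) F j) = \sum_(j <- r) f (F j).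
Proof. exact: linsum. Qed.
Lemma linsumZT N (f : 'M[algC]_N -> 'M[algC]_N) (fL : linear f) I r (b : I -> algC) (A : I -> 'M_N) :
  f (\sum_(j <- r) (b j *: A j : 'M[algC]_N)) = \sum_(j <- r) (b j *: f (A j) : 'M[algC]_N).
Proof. exact: linsumZ. Qed.
Lemma linsum2 N (f : 'M[algC]_N -> 'M[algC]_N) (fL : linear f) I J r (t : I -> seq J)
  (b : I -> J -> algC) (A : I -> J -> 'M_N) :
  f (\sum_(j <- r) \sum_(k <- t j) (b j k *: A j k : 'M[algC]_N)) = \sum_(j <- r) \sum_(k <- t j) (b j k *: f (A j k) : 'M[algC]_N).
Proof. rewrite (linsum fL); apply: eq_bigr => j _; exact: linsumZ. Qed.

Unset Implicit Arguments. Set Strict Implicit.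


Theorem lemma5p5 (n i : nat) (c0 : algC) (p : 'M[algC]_(n + n) -> 'M[algC]_(n + n)) :
  (3 <= n)%N -> (2 <= i <= n.-1)%N -> 0 < c0 ->
  is_pr_lgamma i p ->
  let a := (i.+1)%:R : algC in
  let Y := Xnp n 1 i.+1 + Xd n i.+1 2 in
  tscale (8 * c0 ^+ 2 / a) (tmapl p (tau2bar i c0 Y)) =
    tscale (4 * c0 / a) (tens (Xd n 1 2) (Xm2 n 1))
  - tscale (4 * c0 / a) (tens (Xd n 2 1) (Xm2 n 2))
  + tscale (2 * c0 / a) (\sum_(3 <= k < i.+1) tens (Xd n k 2) (Xnp n 1 k))
  - tscale (2 * c0 / a) (\sum_(3 <= k < i.+1) tens (Xd n k 1) (Xnp n 2 k))
  - tscale (2 * c0 / a) (tens (Hd n 1 2) (Xnp n 1 2)).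
Proof.
move=> hn /andP[hi hin'] hc0 hp a Y.
have hin : (i.+1 <= n)%N by lia.
case: hp => pL [pH [pX [pz [phc [pXl [pXp [pX2 [p1 [p2 p3]]]]]]]]].
have g1 : p (ad Y (ad Y (X2 n 1))) = Xd n 1 2.
  rewrite (LA1 n i hi hin) (linB pL) (linD pL) (pX2 i.+1 _).2 ?addr0 ?subr0; last by lia.
  by apply: pX => //; lia.
have g2 : p (ad Y (ad Y (X2 n 2))) = - Xd n 2 1.
  rewrite (LA2 n i hi hin) (linB pL) (linD pL) (pX2 i.+1 _).1 ?addr0 ?sub0r; last by lia.
  by rewrite pX //; lia.
have g3 j : (3 <= j <= i)%N -> p (ad Y (ad Y (X2 n j))) = 0.
  by move=> hj; rewrite (LA3 n i hi hin _ hj) (lin0 (adL Y)) (lin0 pL).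
have g12 : p (ad Y (ad Y (Xp n 1 2))) = - Hd n 1 2.
  rewrite (LB12 n i hi hin) (linB pL) (linD pL (hc n i.+1)) (phc i.+1) ?addr0 ?subr0; last by lia.
  rewrite -opprB -Hd12; last by lia.
  by rewrite (linN pL) pH.
have g1k k : (3 <= k <= i)%N -> p (ad Y (ad Y (Xp n 1 k))) = Xd n k 2.
  by move=> hk; rewrite (LB1 n i hi hin _ hk) pX //; lia.
have g2k k : (3 <= k <= i)%N -> p (ad Y (ad Y (Xp n 2 k))) = - Xd n k 1.
  by move=> hk; rewrite (LB2 n i hi hin _ hk) (linN pL) pX //; lia.
have gjk j k : (3 <= j)%N -> (j < k <= i)%N -> p (ad Y (ad Y (Xp n j k))) = 0.
  by move=> hj hk; rewrite (LB3 n i hi hin _ _ hj hk) (lin0 (adL Y)) (lin0 pL).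
pose g := fun A => p (ad Y (ad Y A)).
have gL : linear g := compL pL (compL (adL Y) (adL Y)).
have gE A : p (ad Y (ad Y A)) = g A by [].
rewrite /tau2bar /omegabar.
apply/matrixP => r c.
rewrite !(sum2tensE, sumtensE, tscaleE, tmaplE, tensE, mxE).
rewrite (linZ pL) gE (linD gL) !(linZ gL).
rewrite (linsumZT gL _ (fun j => Xm2 n j r c) (fun j => X2 n j)).
rewrite (linsum2 gL _ (fun j => index_iota j.+1 i.+1) (fun j k => Xnp n j k r c) (fun j k => Xp n j k)).
cbv beta.
have h1 : (1 < i.+1)%N by lia.
have h2 : (2 < i.+1)%N by lia.
rewrite big_ltn // big_ltn // (sum_nat0 (F := fun j => Xm2 n j r c *: g (X2 n j))); last first.
  by move=> j hj; rewrite /g g3 ?scaler0.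
rewrite big_ltn // big_ltn // (sum_nat0 (F := fun j => \sum_(j.+1 <= k < i.+1) Xnp n j k r c *: g (Xp n j k))); last first.
  move=> j hj; apply: sum_nat0 => k hk.
  by rewrite /g gjk ?scaler0 //; lia.
rewrite big_ltn //.
rewrite /g g1 g2 g12.
under eq_big_nat => k hk do rewrite g1k //.
have -> : \sum_(3 <= k < i.+1) Xnp n 2 k r c *: p (ad Y (ad Y (Xp n 2 k))) =
          - \sum_(3 <= k < i.+1) Xnp n 2 k r c *: Xd n k 1.
  rewrite -sumrN; apply: eq_big_nat => k hk; rewrite g2k ?scalerN //.
have c0n : c0 != 0 by rewrite (gt_eqF hc0).
have an : i.+1%:R != 0 :> algC by rewrite pnatr_eq0.
rewrite /a.
apply/matrixP => u v; rewrite !(mxE, summxE).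
field.
by rewrite c0n andbT addrC natr1.
Qed.
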